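(* For every Turing degree $\boldsymbol{d}$, there exist equivalence relations $E$ and $F$ on $\omega$ such that $E$ is finitarily reducible to $F$ via a computable function, but there is no $\boldsymbol{d}$-computable reduction from $E$ to $F$.
   Context: For equivalence relations $E,F$ on $\omega$, a reduction from $E$ to $F$ is a function $g:\omega\to\omega$ with $x\,E\,y\iff g(x)\,F\,g(y)$ for all $x,y$; it is $\boldsymbol{d}$-computable if computable from a set of degree $\boldsymbol{d}$. $E$ is finitarily reducible to $F$ if there is one total computable function which, given $n\ge1$ and an $n$-tuple $(x_0,\dots,x_{n-1})\in\omega^n$, outputs an $n$-tuple $(y_0,\dots,y_{n-1})$ with $x_i\,E\,x_j\iff y_i\,F\,y_j$ for all $i<j<n$. *)

(* Defs.v *)
(* Oracle computability via mu-recursive programs with an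
   oracle atom. *)
From Stdlib Require Import Arith List Relations.
Import ListNotations.

Inductive prog : Type :=
  | PZero : prog
  | PSucc : prog
  | PProj : nat -> prog                (* i-th argument (0 if absent) *)
  | POracle : prog
  | PComp : prog -> list prog -> prog
  | PRec : prog -> prog -> prog
  | PMu : prog -> prog.

Inductive eval (A : nat -> bool) : prog -> list nat -> nat -> Prop :=
  | ev_zero : forall xs, eval A PZero xs 0
  | ev_succ : forall xs, eval A PSucc xs (S (hd 0 xs))
  | ev_proj : forall i xs, eval A (PProj i) xs (nth i xs 0)
  | ev_oracle : forall xs, eval A POracle xs (if A (hd 0 xs) then 1 else 0)
  | ev_comp : forall f gs xs ys z,
      Forall2 (fun g y => eval A g xs y) gs ys ->
      eval A f ys z -> eval A (PComp f gs) xs z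
  | ev_rec0 : forall f g xs z,
      eval A f xs z -> eval A (PRec f g) (0 :: xs) z
  | ev_recS : forall f g n xs r z,
      eval A (PRec f g) (n :: xs) r ->
      eval A g (n :: r :: xs) z ->
      eval A (PRec f g) (S n :: xs) z
  | ev_mu : forall f xs n,
      eval A f (n :: xs) 0 ->
      (forall m, m < n -> exists k, k <> 0 /\ eval A f (m :: xs) k) ->
      eval A (PMu f) xs n.

Definition computable_from (A : nat -> bool) (f : nat -> nat) : Prop :=
  exists p : prog, forall x, eval A p [x] (f x).

Definition computable (f : nat -> nat) : Prop :=
  computable_from (fun _ => false) f.

Definition cpair (x y : nat) : nat := (x + y) * (x + y + 1) / 2 + y.

Fixpoint code (l : list nat) : nat :=
  match l with
  | [] => 0
  | x :: l' => S (cpair x (code l'))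
  end.

Definition is_reduction (E F : relation nat) (g : nat -> nat) : Prop :=
  forall x y, E x y <-> F (g x) (g y).

Definition finitarily_reducible (E F : relation nat) : Prop :=
  exists g : nat -> nat, computable g /\
    forall xs : list nat, 1 <= length xs ->
      exists ys : list nat, g (code xs) = code ys /\ length ys = length xs /\
        forall i j, i < j -> j < length xs ->
          (E (nth i xs 0) (nth j xs 0) <-> F (nth i ys 0) (nth j ys 0)).

(* Main.v *)
Require Import Defs.
From Stdlib Require Import Arith List Relations Lia ZArith Classical ClassicalEpsilon FinFun.
Import ListNotations.

Fixpoint tri (n : nat) : nat := match n with 0 => 0 | S k => S k + tri k end.

Lemma tri2 : forall n, 2 * tri n = n * (n + 1).
Proof. induction n; simpl; lia. Qed.

Lemma cpair_tri : forall x y, cpair x y = tri (x + y) + y.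
Proof.
  intros. unfold cpair. f_equal. rewrite <- tri2.
  rewrite Nat.mul_comm. apply Nat.div_mul. lia.
Qed.

Lemma tri_mono : forall a b, a <= b -> tri a <= tri b.
Proof. intros a b H; induction H; simpl; lia. Qed.

Lemma tri_ge : forall n, n <= tri n.
Proof. induction n; simpl; lia. Qed.

Lemma cpair_inj : forall x y x' y', cpair x y = cpair x' y' -> x = x' /\ y = y'.
Proof.
  intros x y x' y' H. rewrite !cpair_tri in H.
  assert (x + y = x' + y').
  { destruct (Nat.lt_trichotomy (x+y) (x'+y')) as [h|[h|h]]; auto.
    - pose proof (tri_mono (S (x+y)) (x'+y') h). simpl in *. lia.
    - pose proof (tri_mono (S (x'+y')) (x+y) h). simpl in *. lia. }
  rewrite H0 in H. lia.
Qed.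

Lemma cpair_surj : forall m, exists x y, cpair x y = m.
Proof.
  intro m.
  assert (exists s, tri s <= m < tri (S s)) as [s Hs].
  { induction m.
    - exists 0; simpl; lia.
    - destruct IHm as [s Hs].
      destruct (Nat.lt_ge_cases (S m) (tri (S s))).
      + exists s; lia.
      + exists (S s). simpl in *. lia. }
  exists (s - (m - tri s)), (m - tri s). rewrite cpair_tri. simpl in Hs.
  replace (s - (m - tri s) + (m - tri s)) with s by lia. lia.
Qed.

Lemma code_inj : forall l l', code l = code l' -> l = l'.
Proof.
  induction l; destruct l'; simpl; intros H; try discriminate; auto.
  injection H as H. apply cpair_inj in H as [-> H]. f_equal; auto.
Qed.

Lemma code_surj : forall c, exists l, code l = c.
Proof.
  intro c. induction c as [c IH] using lt_wf_ind.
  destruct c. exists []; reflexivity.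
  destruct (cpair_surj c) as [x [y Hxy]].
  assert (y < S c). { rewrite <- Hxy, cpair_tri. lia. }
  destruct (IH y H) as [l Hl]. exists (x :: l). simpl. congruence.
Qed.

Lemma code_bound : forall l a, In a l -> a < code l.
Proof.
  induction l; simpl; intros b H. contradiction.
  rewrite cpair_tri. pose proof (tri_ge (a + code l)).
  destruct H. subst; lia. specialize (IHl b H). lia.
Qed.

Section Progs.
Variable A : nat -> bool.

Lemma comp1 : forall f g xs y z, eval A g xs y -> eval A f [y] z -> eval A (PComp f [g]) xs z.
Proof. intros. eapply ev_comp; eauto. Qed.
Lemma comp2 : forall f g1 g2 xs y1 y2 z, eval A g1 xs y1 -> eval A g2 xs y2 ->
  eval A f [y1; y2] z -> eval A (PComp f [g1; g2]) xs z.
Proof. intros. eapply ev_comp; eauto. Qed.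
Lemma comp3 : forall f g1 g2 g3 xs y1 y2 y3 z, eval A g1 xs y1 -> eval A g2 xs y2 ->
  eval A g3 xs y3 -> eval A f [y1; y2; y3] z -> eval A (PComp f [g1; g2; g3]) xs z.
Proof. intros. eapply ev_comp; eauto. Qed.

Lemma proj : forall i xs y, nth i xs 0 = y -> eval A (PProj i) xs y.
Proof. intros; subst; constructor. Qed.
Lemma succ : forall x xs y, y = S x -> eval A PSucc (x :: xs) y.
Proof. intros; subst; constructor. Qed.
Lemma zero : forall xs y, y = 0 -> eval A PZero xs y.
Proof. intros; subst; constructor. Qed.

Lemma rec_spec : forall f g xs (h : nat -> nat),
  eval A f xs (h 0) -> (forall n, eval A g (n :: h n :: xs) (h (S n))) ->
  forall n, eval A (PRec f g) (n :: xs) (h n).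
Proof. intros. induction n. constructor; auto. econstructor; eauto. Qed.
End Progs.

Ltac ev := repeat first
  [ eapply comp1 | eapply comp2 | eapply comp3
  | (eapply proj; simpl; reflexivity) | (eapply succ; reflexivity)
  | (eapply zero; reflexivity) ].

Definition predP := PRec PZero (PProj 0).
Lemma predP_ok A n xs : eval A predP (n :: xs) (pred n).
Proof. apply (rec_spec A _ _ _ pred); intros; [constructor | ev]. Qed.

Definition addP := PRec (PProj 0) (PComp PSucc [PProj 1]).
Lemma addP_ok A n y xs : eval A addP (n :: y :: xs) (n + y).
Proof. apply (rec_spec A _ _ _ (fun n => n + y)); intros; ev. Qed.

Definition subP := PRec (PProj 0) (PComp predP [PProj 1]).
Lemma subP_ok A n y xs : eval A subP (n :: y :: xs) (y - n).
Proof. apply (rec_spec A _ _ _ (fun n => y - n)); intros. apply proj; simpl; lia.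
  eapply comp1. ev. replace (y - S n0) with (pred (y - n0)) by lia. apply predP_ok. Qed.

Lemma subP_ok' A n y xs z : z = y - n -> eval A subP (n :: y :: xs) z.
Proof. intros ->; apply subP_ok. Qed.

Definition mulP := PRec PZero (PComp addP [PProj 1; PProj 2]).
Lemma mulP_ok A n y xs : eval A mulP (n :: y :: xs) (n * y).
Proof. apply (rec_spec A _ _ _ (fun n => n * y)); intros. ev.
  eapply comp2; try (apply proj; reflexivity).
  replace (S n0 * y) with (n0 * y + y) by lia. apply addP_ok. Qed.

Definition triP := PRec PZero (PComp addP [PComp PSucc [PProj 0]; PProj 1]).
Lemma triP_ok A n xs : eval A triP (n :: xs) (tri n).
Proof. apply (rec_spec A _ _ _ tri); intros. ev.
  eapply comp2. ev. ev. apply addP_ok. Qed.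

Definition cpairP := PComp addP [PComp triP [PComp addP [PProj 0; PProj 1]]; PProj 1].
Lemma cpairP_ok A x y xs : eval A cpairP (x :: y :: xs) (cpair x y).
Proof. rewrite cpair_tri. eapply comp2. eapply comp1. eapply comp2; ev. apply addP_ok.
  apply triP_ok. ev. apply addP_ok. Qed.

Definition muF := PComp subP [PComp triP [PComp PSucc [PProj 0]]; PComp PSucc [PProj 1]].
Lemma muF_ok A s m xs : eval A muF (s :: m :: xs) (S m - tri (S s)).
Proof. eapply comp2. eapply comp1. ev. apply triP_ok. ev. apply subP_ok. Qed.

Definition sP := PMu muF.
Lemma sP_ok A x y : eval A sP [cpair x y] (x + y).
Proof. constructor.
  - replace 0 with (S (cpair x y) - tri (S (x + y))). apply muF_ok.
    rewrite cpair_tri. simpl. lia.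
  - intros m Hm. eexists; split. 2: apply muF_ok.
    rewrite cpair_tri. pose proof (tri_mono (S m) (x + y) Hm). lia.
Qed.

Definition tailP := PComp subP [PComp triP [PComp sP [PComp predP [PProj 0]]]; PComp predP [PProj 0]].
Lemma tailP_ok A x l : eval A tailP [code (x :: l)] (code l).
Proof. eapply comp2. eapply comp1. eapply comp1. eapply comp1. ev. apply predP_ok.
  simpl. apply sP_ok. apply triP_ok. eapply comp1. ev. apply predP_ok.
  simpl. apply subP_ok'. rewrite cpair_tri. lia. Qed.

Definition headP := PComp subP [tailP; PComp sP [PComp predP [PProj 0]]].
Lemma headP_ok A x l : eval A headP [code (x :: l)] x.
Proof. eapply comp2. apply tailP_ok. eapply comp1. eapply comp1. ev. apply predP_ok.
  simpl. apply sP_ok. apply subP_ok'. lia. Qed.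

Lemma skipn_nth : forall (xs : list nat) k, k < length xs ->
  skipn k xs = nth k xs 0 :: skipn (S k) xs.
Proof. induction xs; simpl; intros. lia. destruct k; simpl; auto. apply IHxs; lia. Qed.

Definition iterP := PRec (PProj 0) (PComp tailP [PProj 1]).
Lemma iterP_ok A xs k : k <= length xs -> eval A iterP [k; code xs] (code (skipn k xs)).
Proof. induction k; intros. constructor. ev.
  econstructor. apply IHk; lia. eapply comp1. ev.
  rewrite (skipn_nth xs k) by lia. apply tailP_ok. Qed.

Definition lenP := PMu iterP.
Lemma lenP_ok A xs : eval A lenP [code xs] (length xs).
Proof. constructor. replace 0 with (code (skipn (length xs) xs)). apply iterP_ok; lia.
  rewrite skipn_all; reflexivity.
  intros m Hm. exists (code (skipn m xs)). split. rewrite skipn_nth by lia. simpl; lia.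
  apply iterP_ok; lia. Qed.

Definition hP := PComp addP [PComp mulP [PProj 0; PProj 0]; PProj 1].
Lemma hP_ok A c x : eval A hP [c; x] (c * c + x).
Proof. eapply comp2. eapply comp2; ev. apply mulP_ok. ev. apply addP_ok. Qed.

Definition consP := PComp PSucc [cpairP].
Lemma consP_ok A a b : eval A consP [a; b] (S (cpair a b)).
Proof. eapply comp1. apply cpairP_ok. ev. Qed.

Definition idxP := PComp subP [PComp PSucc [PProj 0]; PProj 2].
Definition iterc := PComp iterP [idxP; PProj 3].
Definition xkP := PComp headP [iterc].
Definition hvP := PComp hP [PProj 3; xkP].
Definition stepP := PComp consP [hvP; PProj 1].
Definition accP := PRec PZero stepP.

Definition hfun (c x : nat) := c * c + x.

Lemma accP_ok A xs k : k <= length xs ->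
  eval A accP [k; length xs; code xs] (code (map (hfun (code xs)) (skipn (length xs - k) xs))).
Proof. induction k; intros.
  - constructor. rewrite Nat.sub_0_r, skipn_all. ev.
  - econstructor. apply IHk; lia.
    assert (E : skipn (length xs - S k) xs = nth (length xs - S k) xs 0 :: skipn (length xs - k) xs).
    { rewrite skipn_nth by lia. f_equal. f_equal. lia. }
    rewrite E. simpl map. simpl code.
    eapply comp2. 2: ev. 2: apply consP_ok.
    eapply comp2. ev. 2: apply hP_ok.
    eapply comp1. 2: { apply headP_ok. }
    eapply comp2. 3: (rewrite <- E; apply iterP_ok; lia).
    eapply comp2. ev. ev. apply subP_ok. ev.
Qed.

Definition GP := PComp accP [lenP; lenP; PProj 0].
Lemma GP_ok A xs : eval A GP [code xs] (code (map (hfun (code xs)) xs)).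
Proof. eapply comp3. apply lenP_ok. apply lenP_ok. ev.
  pose proof (accP_ok A xs (length xs) (le_n _)) as H.
  rewrite Nat.sub_diag in H. exact H. Qed.

Lemma eval_det A : forall p xs y, eval A p xs y -> forall y', eval A p xs y' -> y = y'.
Proof.
  fix IH 4. intros p xs y H. destruct H; intros y' H'; inversion H'; subst; auto;
    try (eapply IH; eassumption).
  - assert (ys = ys0).
    { clear H' H0 H6. revert ys0 H3. induction H; intros ys0 H4; inversion H4; subst; auto.
      f_equal. eapply IH; eauto. apply IHForall2; auto. }
    subst. eapply IH; eauto.
  - match goal with
    | H1 : eval A (PRec ?f ?g) (?n :: ?xs) ?r, H2 : eval A (PRec ?f ?g) (?n :: ?xs) ?r0 |- _ =>
      assert (r = r0) by (eapply IH; eauto); subst r0 end.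
    eapply IH; eauto.
  - rename H into Hn, H0 into Hm.
    match goal with
    | H5 : forall m, m < y' -> _ |- _ => rename H5 into Hm' end.
    match goal with
    | H5 : eval A f (y' :: xs) 0 |- _ => rename H5 into Hy end.
    destruct (Nat.lt_trichotomy n y') as [h|[h|h]]; auto.
    + destruct (Hm' _ h) as [k [hk Hk]]. exfalso. apply hk. symmetry. exact (IH _ _ _ Hn _ Hk).
    + destruct (Hm _ h) as [k [hk Hk]]. exfalso. apply hk. exact (IH _ _ _ Hk _ Hy).
Qed.

Fixpoint enc (p : prog) : nat :=
  match p with
  | PZero => cpair 0 0
  | PSucc => cpair 1 0
  | PProj i => cpair 2 i
  | POracle => cpair 3 0
  | PComp f gs => cpair 4 (cpair (enc f) (code (map enc gs)))
  | PRec f g => cpair 5 (cpair (enc f) (enc g))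
  | PMu f => cpair 6 (enc f)
  end.

Lemma enc_inj : forall p q, enc p = enc q -> p = q.
Proof.
  fix IH 1. intros p q H. destruct p, q; simpl in H; apply cpair_inj in H as [H1 H2];
    try discriminate; try reflexivity; try (subst; reflexivity).
  - apply cpair_inj in H2 as [H2 H3]. apply code_inj in H3.
    f_equal. apply IH; assumption. clear H1 H2 p q.
    revert l0 H3. induction l as [|a l IHl]; destruct l0; simpl; intros; try discriminate; try reflexivity.
    injection H3 as H3 H4. f_equal. apply IH; assumption. apply IHl; assumption.
  - apply cpair_inj in H2 as [H2 H3]. f_equal; apply IH; assumption.
  - f_equal; apply IH; assumption.
Qed.

Definition dom (S : list (nat * Z)) := map fst S.
Fixpoint lookup (S : list (nat * Z)) (c : nat) : Z :=
  match S with [] => 0%Z | (a, z) :: S' => if Nat.eqb a c then z else lookup S' c end.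
Definition off (u : nat) := u - Nat.sqrt u * Nat.sqrt u.

Definition Qgb D S e (gb : (nat -> nat) * nat) : Prop :=
  exists p, enc p = e /\ (forall x, eval D p [x] (fst gb x)) /\
    (forall x y, fst gb x = fst gb y -> x = y) /\ snd gb <> 0 /\
    ~ In (Nat.sqrt (fst gb (snd gb))) (Nat.sqrt (fst gb 0) :: dom S).

Definition add0 (S : list (nat * Z)) c :=
  if in_dec Nat.eq_dec c (dom S) then S else (c, 0%Z) :: S.

Definition stepr S (g : nat -> nat) b :=
  let S1 := add0 S (Nat.sqrt (g 0)) in
  (Nat.sqrt (g b), Z.sub (Z.add (lookup S1 (Nat.sqrt (g 0))) (Z.of_nat (off (g 0)))) (Z.of_nat (off (g b)))) :: S1.

Definition step D S e :=
  match excluded_middle_informative (exists gb, Qgb D S e gb) with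
  | left H => let gb := proj1_sig (constructive_indefinite_description _ H) in
              stepr S (fst gb) (snd gb)
  | right _ => S
  end.

Fixpoint st D n := match n with 0 => [] | S n => step D (st D n) n end.

Lemma step_ext D S e : exists P, step D S e = P ++ S /\ forall c, In c (dom P) -> ~ In c (dom S).
Proof.
  unfold step. destruct (excluded_middle_informative _) as [H|H].
  - destruct (constructive_indefinite_description _ H) as [[g b] Hq]; simpl.
    destruct Hq as [p [_ [_ [_ [_ Hn]]]]]; simpl in Hn.
    unfold stepr, add0. destruct (in_dec Nat.eq_dec (Nat.sqrt (g 0)) (dom S)).
    + exists [(Nat.sqrt (g b), Z.sub (Z.add (lookup S (Nat.sqrt (g 0))) (Z.of_nat (off (g 0)))) (Z.of_nat (off (g b))))].
      split; auto. simpl. intros c [<-|[]]. tauto.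
    + eexists [_; _]. split. reflexivity. simpl. intros c [<-|[<-|[]]]; tauto.
  - exists []. split; [reflexivity| simpl; tauto].
Qed.

Lemma st_ext D n m : n <= m -> exists P, st D m = P ++ st D n /\ forall c, In c (dom P) -> ~ In c (dom (st D n)).
Proof.
  induction 1. exists []; simpl; auto.
  destruct IHle as [P [HP HD]]. destruct (step_ext D (st D m) m) as [P' [HP' HD']].
  exists (P' ++ P). simpl. rewrite HP', HP, app_assoc. split; auto.
  intros c Hc. unfold dom in Hc. rewrite map_app in Hc. apply in_app_or in Hc as [Hc|Hc].
  - intro Hn. apply (HD' c Hc). rewrite HP. unfold dom. rewrite map_app. apply in_or_app; auto.
  - apply HD; auto.
Qed.

Lemma lookup_app P S c : ~ In c (dom P) -> lookup (P ++ S) c = lookup S c.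
Proof. induction P as [|[a z] P IH]; simpl; auto. intros Hn. destruct (Nat.eqb_spec a c). tauto. auto. Qed.

Lemma lookup_stable D n m c : n <= m -> In c (dom (st D n)) -> lookup (st D m) c = lookup (st D n) c.
Proof. intros Hnm Hc. destruct (st_ext D n m Hnm) as [P [HP HD]]. rewrite HP.
  apply lookup_app. intro H. exact (HD c H Hc). Qed.

Definition shift D c :=
  match excluded_middle_informative (exists n, In c (dom (st D n))) with
  | left H => lookup (st D (proj1_sig (constructive_indefinite_description _ H))) c
  | right _ => 0%Z end.

Lemma shift_eq D n c : In c (dom (st D n)) -> shift D c = lookup (st D n) c.
Proof. intros Hc. unfold shift. destruct (excluded_middle_informative _) as [H|H].
  - destruct (constructive_indefinite_description _ H) as [n' Hn']; simpl.
    rewrite <- (lookup_stable D n' (max n n')) by (auto; lia).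
    rewrite <- (lookup_stable D n (max n n')) by (auto; lia). reflexivity.
  - exfalso; apply H; eauto.
Qed.

Definition lab D u := Z.add (shift D (Nat.sqrt u)) (Z.of_nat (off u)).
Definition FF D (u w : nat) : Prop := lab D u = lab D w.

Lemma pigeon (g : nat -> nat) : (forall x y, g x = g y -> x = y) -> forall N, exists b, 1 <= b /\ N <= g b.
Proof.
  intros Hg N. apply NNPP. intro Hn.
  assert (Hall : forall b, 1 <= b -> g b < N).
  { intros b Hb. destruct (Nat.lt_ge_cases (g b) N); auto. exfalso; apply Hn; eauto. }
  assert (ND : NoDup (map g (seq 1 (S N)))).
  { apply FinFun.Injective_map_NoDup. intros x y; apply Hg. apply seq_NoDup. }
  assert (Inc : incl (map g (seq 1 (S N))) (seq 0 N)).
  { intros z Hz. apply in_map_iff in Hz as [b [<- Hb]]. apply in_seq in Hb.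
    apply in_seq. specialize (Hall b ltac:(lia)). lia. }
  pose proof (NoDup_incl_length ND Inc). rewrite length_map, !length_seq in H. lia.
Qed.

Lemma exists_b (g : nat -> nat) (L : list nat) : (forall x y, g x = g y -> x = y) ->
  exists b, b <> 0 /\ ~ In (Nat.sqrt (g b)) L.
Proof.
  intros Hg. set (M := S (list_max L)).
  destruct (pigeon g Hg (M * M)) as [b [Hb1 Hb2]]. exists b. split. lia.
  intro Hin. assert (Nat.sqrt (g b) <= list_max L).
  { pose proof (list_max_le L (list_max L)) as [H1 _]. specialize (H1 (le_n _)).
    rewrite Forall_forall in H1. auto. }
  apply Nat.sqrt_le_mono in Hb2. rewrite Nat.sqrt_square in Hb2. lia.
Qed.

Lemma diag D p g : (forall x, eval D p [x] (g x)) -> is_reduction eq (FF D) g -> False.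
Proof.
  intros Hp Hr.
  assert (Hinj : forall x y, g x = g y -> x = y).
  { intros x y H. apply Hr. unfold FF. rewrite H; reflexivity. }
  set (e := enc p).
  destruct (exists_b g (Nat.sqrt (g 0) :: dom (st D e)) Hinj) as [b [Hb Hnb]].
  assert (Hex : exists gb, Qgb D (st D e) e gb).
  { exists (g, b). exists p. simpl. auto 6. }
  assert (Hst : st D (S e) = step D (st D e) e) by reflexivity.
  unfold step in Hst. revert Hst. destruct (excluded_middle_informative _) as [H|H]; [|contradiction].
  destruct (constructive_indefinite_description _ H) as [[g' b'] Hq]; cbn [fst snd]; intro Hst; cbn [proj1_sig fst snd] in Hst.
  destruct Hq as [p' [Hep [Hp' [Hinj' [Hb' Hn']]]]]; cbn [fst snd] in *.
  apply enc_inj in Hep. subst p'.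
  assert (Hgg : forall x, g' x = g x) by (intro x; eapply eval_det; eauto).
  unfold stepr in Hst.
  set (c0 := Nat.sqrt (g' 0)) in *. set (cb := Nat.sqrt (g' b')) in *.
  set (S1 := add0 (st D e) c0) in *.
  assert (Hc0 : In c0 (dom S1)).
  { unfold S1, add0. destruct (in_dec _ _ _); simpl; auto. }
  assert (Hne : cb <> c0) by (intro Hc; apply Hn'; left; auto).
  assert (Ecb : shift D cb = Z.sub (Z.add (lookup S1 c0) (Z.of_nat (off (g' 0)))) (Z.of_nat (off (g' b')))).
  { rewrite (shift_eq D (S e)). rewrite Hst. simpl. rewrite Nat.eqb_refl. reflexivity.
    rewrite Hst. simpl. auto. }
  assert (Ec0 : shift D c0 = lookup S1 c0).
  { rewrite (shift_eq D (S e)). rewrite Hst. simpl.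
    destruct (Nat.eqb_spec cb c0). contradiction. reflexivity.
    rewrite Hst. simpl. auto. }
  assert (FF D (g 0) (g b')).
  { unfold FF, lab. rewrite <- !Hgg. fold c0 cb. rewrite Ecb, Ec0. lia. }
  apply Hr in H0. auto.
Qed.

Definition g0 (c : nat) : nat :=
  code (map (hfun c) (proj1_sig (constructive_indefinite_description _ (code_surj c)))).

Lemma g0_code xs : g0 (code xs) = code (map (hfun (code xs)) xs).
Proof. unfold g0. destruct (constructive_indefinite_description _ _) as [xs' H]; simpl.
  apply code_inj in H. subst; reflexivity. Qed.

Lemma lab_h (D : nat -> bool) (c a : nat) : a < c -> lab D (hfun c a) = Z.add (shift D c) (Z.of_nat a).
Proof. intros H. unfold lab, off, hfun.
  assert (Nat.sqrt (c * c + a) = c) as ->. { apply Nat.sqrt_unique. nia. }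
  f_equal. f_equal. lia. Qed.

Lemma nth_map0 (f : nat -> nat) xs i : i < length xs -> nth i (map f xs) 0 = f (nth i xs 0).
Proof. intros H. rewrite (nth_indep _ _ (f 0)) by (rewrite length_map; auto). apply map_nth. Qed.

Theorem corollary3p8 :
  forall D : nat -> bool,
    exists E F : relation nat,
      equivalence nat E /\ equivalence nat F /\
      finitarily_reducible E F /\
      ~ (exists g : nat -> nat, computable_from D g /\ is_reduction E F g).
Proof.
  intro D. exists eq, (FF D). split; [|split; [|split]].
  - constructor; red; intros; subst; auto.
  - constructor; red; unfold FF; intros; congruence.
  - exists g0. split.
    + exists GP. intro x. destruct (code_surj x) as [xs <-]. rewrite g0_code. apply GP_ok.
    + intros xs Hlen. exists (map (hfun (code xs)) xs). rewrite g0_code, length_map.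
      split; auto. split; auto. intros i j Hij Hj.
      rewrite !nth_map0 by lia. unfold FF.
      assert (Hi' : nth i xs 0 < code xs) by (apply code_bound, nth_In; lia).
      assert (Hj' : nth j xs 0 < code xs) by (apply code_bound, nth_In; lia).
      rewrite !lab_h by auto. split; intros; lia.
  - intros [g [[p Hp] Hr]]. exact (diag D p g Hp Hr).
Qed.
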